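(* Let $\varepsilon>0$, let $\rho,\gamma$ be density matrices on a finite-dimensional system $A$ and $\rho',\gamma'$ density matrices on a finite-dimensional system $A'$. Then $$D_{\min}^\varepsilon\left(\rho\otimes\rho'\,\big\|\,\gamma\otimes\gamma'\right)\leq D_{\min}^\varepsilon(\rho\|\gamma)+D_{\max}(\rho'\|\gamma').$$
   Context: For density matrices $\rho,\gamma$ on a system $A$, the hypothesis testing divergence is $D_{\min}^\varepsilon(\rho\|\gamma)\coloneqq-\log\min\{\mathrm{Tr}[\gamma\Lambda]\,:\,0\le\Lambda\le I^A,\ \mathrm{Tr}[\Lambda\rho]\ge1-\varepsilon\}$, and the max relative entropy is $D_{\max}(\rho\|\gamma)\coloneqq\log\min\{t\ge0: t\gamma\ge\rho\}$ (equal to $+\infty$ if no such $t$ exists). Logarithms are base 2. *)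

(* Defs.v *)
From HB Require Import structures.
From mathcomp Require Import all_boot all_order all_algebra.
From mathcomp Require Import all_classical all_reals.
From mathcomp Require Import exp.
From mathcomp.real_closed Require Import complex mxtens.

Set Implicit Arguments.
Unset Strict Implicit.
Unset Printing Implicit Defensive.

Import Order.TTheory GRing.Theory Num.Theory.
Local Open Scope ring_scope.
Local Open Scope classical_set_scope.

Section QInfo.
Variable R : realType.
Local Notation C := (R[i]).

Definition adjmx {m n : nat} (A : 'M[C]_(m, n)) : 'M[C]_(n, m) :=
  map_mx (@conjc R) A^T.

(* Positive semidefinite: Hermitian and <v, A v> >= 0 for all v
   (0 <= z in R[i] means z is a nonnegative real). *)
Definition psd {n : nat} (A : 'M[C]_n) : Prop :=
  adjmx A = A /\ forall v : 'cV[C]_n, 0 <= (adjmx v *m A *m v) 0 0.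

Definition loewner_le {n : nat} (A B : 'M[C]_n) : Prop := psd (B - A).

Definition density {n : nat} (rho : 'M[C]_n) : Prop :=
  psd rho /\ \tr rho = 1.

Definition elog2 (x : R) : \bar R :=
  if x <= 0 then -oo%E else (ln x / ln 2)%:E.

(* Hypothesis testing divergence:
   - log2 min { Tr[gamma L] : 0 <= L <= I, Tr[L rho] >= 1 - eps }.
   Traces of products of PSD matrices are real; we take real parts. *)
Definition Dmin_set {n : nat} (eps : R) (rho gamma : 'M[C]_n) : set R :=
  [set x | exists L : 'M[C]_n,
     [/\ loewner_le 0 L, loewner_le L 1%:M,
         1 - eps <= complex.Re (\tr (L *m rho)) &
         x = complex.Re (\tr (gamma *m L))]].

Definition Dmin {n : nat} (eps : R) (rho gamma : 'M[C]_n) : \bar R :=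
  (- elog2 (inf (Dmin_set eps rho gamma)))%E.

Definition Dmax_set {n : nat} (rho gamma : 'M[C]_n) : set R :=
  [set t | 0 <= t /\ loewner_le rho ((t%:C)%C *: gamma)].

Definition Dmax {n : nat} (rho gamma : 'M[C]_n) : \bar R :=
  if pselect (Dmax_set rho gamma !=set0)
  then elog2 (inf (Dmax_set rho gamma))
  else +oo%E.

End QInfo.

(* Main.v *)
Require Import Defs.
From HB Require Import structures.
From mathcomp Require Import all_boot all_order all_algebra.
From mathcomp Require Import all_classical all_reals exp.
From mathcomp Require Import spectral sesquilinear.
From mathcomp.real_closed Require Import complex mxtens.
From mathcomp Require Import lra.

Import Order.TTheory GRing.Theory Num.Theory.
Local Open Scope ring_scope.
Set Implicit Arguments.
Unset Strict Implicit.
Unset Printing Implicit Defensive.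

Section LA.
Variable R : realType.
Local Notation C := (R[i]).

Lemma Re_ge0 (z : C) : 0 <= z -> 0 <= complex.Re z.
Proof. by case: z => a b /andP[]. Qed.

Lemma sum_tens m n (F : 'I_(m * n) -> C) :
  \sum_(k < m * n) F k = \sum_(i < m) \sum_(j < n) F (mxtens_index (i, j)).
Proof.
rewrite pair_big /= (reindex (@mxtens_index m n)) /=.
  by apply: eq_bigr => -[i j].
by exists (@mxtens_unindex m n) => k _; rewrite (mxtens_indexK, mxtens_unindexK).
Qed.

Lemma tr_tens m n (A : 'M[C]_m) (B : 'M[C]_n) : \tr (A *t B) = \tr A * \tr B.
Proof.
rewrite /mxtrace sum_tens mulr_suml; apply: eq_bigr => i _.
rewrite mulr_sumr; apply: eq_bigr => j _; by rewrite tensmxE.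
Qed.

Lemma adjmxK m n (A : 'M[C]_(m, n)) : adjmx (adjmx A) = A.
Proof. by apply/matrixP => i j; rewrite !mxE conjcK. Qed.

Lemma adjmx_mul m n p (A : 'M[C]_(m, n)) (B : 'M[C]_(n, p)) :
  adjmx (A *m B) = adjmx B *m adjmx A.
Proof. by rewrite /adjmx trmx_mul map_mxM. Qed.

Lemma adjmx_tens m n p q (A : 'M[C]_(m, n)) (B : 'M[C]_(p, q)) :
  adjmx (A *t B) = adjmx A *t adjmx B.
Proof. by rewrite /adjmx trmx_tens map_mxT. Qed.

Lemma tens_gram m k p l (M : 'M[C]_(m, k)) (N : 'M[C]_(p, l)) :
  (M *m adjmx M) *t (N *m adjmx N) = (M *t N) *m adjmx (M *t N).
Proof. by rewrite adjmx_tens tensmx_mul. Qed.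

Lemma tr_gram_psd n k (M : 'M[C]_(n, k)) (X : 'M[C]_n) :
  psd X -> 0 <= \tr (M *m adjmx M *m X).
Proof.
move=> [_ hX]; rewrite -mulmxA mxtrace_mulC /mxtrace.
apply: sumr_ge0 => j _.
have -> : (adjmx M *m X *m M) j j = (adjmx (col j M) *m X *m col j M) 0 0.
  rewrite !mxE; apply: eq_bigr => b _; rewrite !mxE; congr (_ * _).
  by apply: eq_bigr => a _; rewrite !mxE.
exact: hX.
Qed.

Local Open Scope sesquilinear_scope.

Lemma adj_diag n (e : 'rV[C]_n) : adjmx (diag_mx e) = diag_mx (map_mx conjc e).
Proof. by rewrite /adjmx tr_diag_mx map_diag_mx. Qed.

Lemma psd_gram n (A : 'M[C]_n) : psd A -> exists M : 'M[C]_(n, n), A = M *m adjmx M.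
Proof.
move=> [hA hpos].
have hA' : A ^t* = A := hA.
have nA : A \is normalmx by apply/normalmxP; rewrite hA'.
set P := spectralmx A; set d := spectral_diag A.
have hU : P \is unitarymx := spectral_unitarymx A.
have eA : A = P ^t* *m diag_mx d *m P.
  by rewrite -invmx_unitary //; exact/orthomx_spectralP.
have PP : P *m P ^t* = 1%:M := unitarymxP hU.
have dge0 : forall k, 0 <= d 0 k.
  move=> k; have := hpos (adjmx (row k P)); rewrite adjmxK.
  have -> : (row k P *m A *m adjmx (row k P)) 0 0 = (P *m A *m P ^t*) k k.
    rewrite !mxE; apply: eq_bigr => b _; rewrite !mxE; congr (_ * _).
    by apply: eq_bigr => a _; rewrite !mxE.
  have -> : P *m A *m P ^t* = diag_mx d.
    by rewrite eA !mulmxA PP mul1mx -!mulmxA PP mulmx1.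
  by rewrite mxE eqxx mulr1n.
exists (P ^t* *m diag_mx (map_mx sqrtC d)).
rewrite adjmx_mul adj_diag.
have -> : adjmx (P ^t*) = P by apply: adjmxK.
rewrite -!mulmxA [diag_mx _ *m (_ *m _)]mulmxA mulmx_diag eA -mulmxA; congr (_ *m (diag_mx _ *m _)).
apply/rowP => k; rewrite !mxE.
have h := dge0 k.
have e : conjc (sqrtC (d 0 k)) = sqrtC (d 0 k) by apply: geC0_conj; rewrite sqrtC_ge0.
by rewrite e -expr2 sqrtCK.
Qed.


Lemma tens_psd_tr m n (A : 'M[C]_m) (B : 'M[C]_n) (X : 'M[C]_(m * n)) :
  psd A -> psd B -> psd X -> 0 <= \tr ((A *t B) *m X).
Proof.
move=> /psd_gram[M ->] /psd_gram[N ->] hX.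
by rewrite tens_gram; apply: tr_gram_psd.
Qed.

Definition ptr m n (L : 'M[C]_(m * n)) (s : 'M[C]_n) : 'M[C]_m :=
  \matrix_(i, j) \sum_(k < n) \sum_(l < n)
     L (mxtens_index (i, k)) (mxtens_index (j, l)) * s l k.

Lemma ptr_tr m n (L : 'M[C]_(m * n)) (s : 'M[C]_n) (P : 'M[C]_m) :
  \tr (P *m ptr L s) = \tr ((P *t s) *m L).
Proof.
rewrite /mxtrace sum_tens; apply: eq_bigr => i _.
rewrite mxE; under eq_bigr do rewrite mxE mulr_sumr.
under [RHS]eq_bigr do rewrite mxE sum_tens.
rewrite [RHS]exchange_big /=; apply: eq_bigr => j _.
rewrite [RHS]exchange_big /=; apply: eq_bigr => k _.
rewrite mulr_sumr; apply: eq_bigr => l _.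
by rewrite tensmxE -mulrA [s l k * _]mulrC.
Qed.

Lemma ptr_herm m n (L : 'M[C]_(m * n)) (s : 'M[C]_n) :
  adjmx L = L -> adjmx s = s -> adjmx (ptr L s) = ptr L s.
Proof.
move=> hL hs.
have eL a b : L a b = conjc (L b a) by rewrite -{1}hL /adjmx !mxE.
have es a b : s a b = conjc (s b a) by rewrite -{1}hs /adjmx !mxE.
apply/matrixP => i j; rewrite /adjmx !mxE rmorph_sum /= exchange_big /=.
apply: eq_bigr => l _; rewrite rmorph_sum /=; apply: eq_bigr => k _.
by rewrite (eL (mxtens_index (i, k))) (es l k) rmorphM.
Qed.

Lemma tr11 (x : 'M[C]_1) : x 0 0 = \tr x.
Proof. by rewrite /mxtrace big_ord1. Qed.

Lemma ptr_psd m n (L : 'M[C]_(m * n)) (s : 'M[C]_n) :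
  psd L -> psd s -> psd (ptr L s).
Proof.
move=> hL hs; split; first exact: ptr_herm hL.1 hs.1.
move=> v; rewrite tr11 mxtrace_mulC mulmxA ptr_tr.
have [N ->] := psd_gram hs.
by rewrite tens_gram; apply: tr_gram_psd.
Qed.

Lemma ptrB m n (L1 L2 : 'M[C]_(m * n)) (s : 'M[C]_n) :
  ptr (L1 - L2) s = ptr L1 s - ptr L2 s.
Proof.
apply/matrixP => i j; rewrite !mxE -sumrB; apply: eq_bigr => k _.
by rewrite -sumrB; apply: eq_bigr => l _; rewrite !mxE mulrBl.
Qed.

Lemma ptr1 m n (s : 'M[C]_n) : \tr s = 1 -> ptr (1%:M : 'M[C]_(m * n)) s = 1%:M.
Proof.
move=> hs; apply/matrixP => i j; rewrite !mxE.
under eq_bigr => k _ do under eq_bigr => l _ do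
  rewrite mxE (can_eq (@mxtens_indexK m n)) xpair_eqE -mulnb natrM -mulrA.
under eq_bigr => k _ do rewrite -mulr_sumr.
rewrite -mulr_sumr -[RHS]mulr1; congr (_ * _); rewrite -[in RHS]hs.
apply: eq_bigr => k _.
transitivity ((1%:M *m s) k k); last by rewrite mul1mx.
by rewrite mxE; apply: eq_bigr => l _; rewrite mxE.
Qed.


Lemma ReM (t : R) (z : C) : complex.Re ((t%:C)%C * z) = t * complex.Re z.
Proof. by case: z => a b /=; rewrite mul0r subr0. Qed.

Lemma adjmx1 n : adjmx (1%:M : 'M[C]_n) = 1%:M.
Proof. by rewrite /adjmx trmx1 map_mx1. Qed.

Lemma adjmx0 n : adjmx (0 : 'M[C]_n) = 0.
Proof. by rewrite /adjmx trmx0 map_mx0. Qed.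

Lemma tr_psd n (X : 'M[C]_n) : psd X -> 0 <= \tr X.
Proof.
move=> hX; have := tr_gram_psd (1%:M : 'M[C]_n) hX.
by rewrite adjmx1 !mul1mx.
Qed.

Lemma psd1 n : psd (1%:M : 'M[C]_n).
Proof.
split; first exact: adjmx1.
move=> v; rewrite mulmx1 mxE; apply: sumr_ge0 => a _.
by rewrite /adjmx !mxE mulrC mul_conjC_ge0.
Qed.

Lemma psd0 n : psd (0 : 'M[C]_n).
Proof. by split; [exact: adjmx0 | move=> v; rewrite mulmx0 mul0mx mxE]. Qed.

Lemma tensmxBr m n p q (A : 'M[C]_(m, n)) (B D : 'M[C]_(p, q)) (c : C) :
  A *t (c *: B - D) = c *: (A *t B) - A *t D.
Proof.
apply/matrixP => i j; rewrite !mxE.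
by rewrite mulrBr mulrCA.
Qed.

End LA.

Local Open Scope classical_set_scope.

Lemma ReB (R : realType) (u w : R[i]) : complex.Re (u - w) = complex.Re u - complex.Re w.
Proof. by case: u => a b; case: w => c d. Qed.

Theorem lemma3 (R : realType) (n n' : nat) (eps : R) (heps : 0 < eps)
  (rho gamma : 'M[R[i]]_n) (rho' gamma' : 'M[R[i]]_n')
  (hrho : density rho) (hgamma : density gamma)
  (hrho' : density rho') (hgamma' : density gamma') :
  (Dmin eps (tensmx rho rho') (tensmx gamma gamma')
     <= Dmin eps rho gamma + Dmax rho' gamma')%E.
Proof.
set S := Dmin_set eps rho gamma.
set S2 := Dmin_set eps (rho *t rho') (gamma *t gamma').
set T := Dmax_set rho' gamma'.
have [hr hrt] := hrho; have [hg hgt] := hgamma.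
have [hr' hr't] := hrho'; have [hg' hg't] := hgamma'.
have trx (X : 'M[R[i]]_n) : psd X -> 0 <= complex.Re (\tr (gamma *m X)).
  move=> hX; have [M eM] := psd_gram hg; rewrite eM.
  exact/Re_ge0/tr_gram_psd.
have S0 : S !=set0.
  exists (complex.Re (\tr (gamma *m 1%:M))); exists 1%:M; split.
  - by rewrite /loewner_le subr0; exact: psd1.
  - by rewrite /loewner_le subrr; exact: psd0.
  - by rewrite mul1mx hrt /= lerBlDr lerDl ltW.
  - by [].
have S2ne : S2 !=set0.
  exists (complex.Re (\tr ((gamma *t gamma') *m 1%:M))); exists 1%:M; split.
  - by rewrite /loewner_le subr0; exact: psd1.
  - by rewrite /loewner_le subrr; exact: psd0.
  - by rewrite mul1mx tr_tens hrt hr't mulr1 /= lerBlDr lerDl ltW.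
  - by [].
have Slb : lbound S 0.
  by move=> x [L [hL0 _ _ ->]]; apply: trx; move: hL0; rewrite /loewner_le subr0.
have Tge1 : forall t, T t -> 1 <= t.
  move=> t [t0 hl]; have := Re_ge0 (tr_psd hl).
  rewrite raddfB /= mxtraceZ hg't hr't mulr1 ReB /=.
  by rewrite subr_ge0.
have hT1 : forall Tne : T !=set0, 1 <= inf T.
  by move=> Tne; apply: lb_le_inf Tne _ => t; exact: Tge1.
have hasS : has_lbound S by exists 0.
set a := inf S.
have a_ge0 : 0 <= a := lb_le_inf S0 Slb.
case: (leP a 0) => [a0|apos].
  have hDmax : Dmax rho' gamma' != -oo%E.
    rewrite /Dmax; case: pselect => // Tne.
    rewrite /elog2; case: ifP => // h.
    by have := le_trans (hT1 Tne) h; rewrite ler10.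
  have -> : Dmin eps rho gamma = +oo%E by rewrite /Dmin /elog2 -/S -/a a0.
  by rewrite addye // leey.
rewrite /Dmax; case: pselect => [Tne|Te]; last first.
  by rewrite addey ?leey // /Dmin /elog2 -/S -/a leNgt apos.
rewrite -/T.
set tau := inf T.
have tau1 : 1 <= tau := hT1 Tne.
have tau0 : 0 < tau := lt_le_trans ltr01 tau1.
have key : forall x, S2 x -> a / tau <= x.
  move=> x [L [hL0 hL1 htr ->]].
  rewrite /loewner_le subr0 in hL0.
  set LA := ptr L rho'.
  have SA : S (complex.Re (\tr (gamma *m LA))).
    exists LA; split.
    - by rewrite /loewner_le subr0; exact: ptr_psd.
    - by rewrite /loewner_le -(@ptr1 _ n n' rho' hr't) -ptrB; exact: ptr_psd.
    - by rewrite mxtrace_mulC ptr_tr mxtrace_mulC.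
    - by [].
  have ay : a <= complex.Re (\tr (gamma *m LA)) := ge_inf hasS SA.
  rewrite /LA ptr_tr in ay.
  set y := complex.Re (\tr ((gamma *t rho') *m L)) in ay.
  set z := complex.Re (\tr ((gamma *t gamma') *m L)).
  have yt : forall t, T t -> y <= t * z.
    move=> t [t0 hl]; have := Re_ge0 (tens_psd_tr hg hl hL0).
    rewrite tensmxBr mulmxBl -scalemxAl raddfB /= mxtraceZ ReB.
    rewrite /y /z; move: (\tr (gamma *t gamma' *m L)) (\tr (gamma *t rho' *m L)).
    by move=> [c1 c2] d /=; rewrite mul0r subr0 subr_ge0.
  have [t1 Tt1] := Tne.
  have z0 : 0 < z.
    have : 0 < t1 * z := lt_le_trans (lt_le_trans apos ay) (yt _ Tt1).
    by rewrite pmulr_rgt0 // (lt_le_trans ltr01 (Tge1 _ Tt1)).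
  have lb : lbound T (a / z).
    by move=> t Tt; rewrite ler_pdivrMr // (le_trans ay (yt t Tt)).
  have := lb_le_inf Tne lb.
  by rewrite !ler_pdivrMr // mulrC.
have b_ge : a / tau <= inf S2 := lb_le_inf S2ne key.
set b := inf S2 in b_ge.
have bpos : 0 < b := lt_le_trans (divr_gt0 apos tau0) b_ge.
rewrite /Dmin /elog2 -/S -/S2 -/a -/b -/tau.
rewrite (leNgt b) bpos (leNgt a) apos (leNgt tau) tau0 /=.
rewrite -EFinD lee_fin.
have l2 : 0 < ln (2 : R) by apply: ln_gt0; rewrite ltr1n.
have hl : ln a - ln tau <= ln b.
  rewrite -ln_div ?posrE // ler_ln ?posrE ?divr_gt0 //.
have : (ln a - ln tau) / ln 2 <= ln b / ln 2 by rewrite ler_pM2r ?invr_gt0.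
rewrite mulrBl.
set u := ln a / ln 2; set v := ln tau / ln 2; set w := ln b / ln 2.
move=> h; lra.
Qed.
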